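(* Let $(X,d)$ be a locally compact metric space with a flow $\pi$ and let $M$ be a compact subset of $X$. Then $\Omega(M)$ is quasi-attracting, i.e. $\Omega(M)$ is a closed set which is an intersection of attracting sets.
   Context: A flow is a continuous map $\pi: X\times\mathbb{R}\to X$ with $\pi(x,0)=x$ and $\pi(\pi(x,t),s)=\pi(x,t+s)$; write $x\cdot t=\pi(x,t)$ and $Y\cdot T=\{y\cdot s: y\in Y, s\in T\}$. A set $Y$ is positively invariant if $Y\cdot\mathbb{R}^+=Y$. For $Y\subseteq X$, $\omega(Y)=\bigcap_{t\ge0}\overline{Y\cdot[t,\infty)}$. A positively invariant closed set $A\subseteq X$ is an attracting set if there is a neighborhood $U$ of $A$ with $\omega(U)\subseteq A$; a closed set which is an intersection of attracting sets is a quasi-attracting set. For $x,y\in X$ and $\varepsilon,t>0$, an $(\varepsilon,t)$-chain from $x$ to $y$ is a pair of finite sequences $x=x_1,\dots,x_{n+1}=y$ in $X$ and $t_1,\dots,t_n$ in $\mathbb{R}^+$ with $t_i\ge t$ and $d(x_i\cdot t_i,x_{i+1})\le\varepsilon$ for all $i$. $\Omega(x)$ is the set of $y$ such that for every $\varepsilon,t>0$ there is an $(\varepsilon,t)$-chain from $x$ to $y$, and $\Omega(M)=\bigcup_{x\in M}\Omega(x)$. *)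

(* Defs.v *)
From Stdlib Require Import Reals.
Open Scope R_scope.

Record metric_space (X : Type) (d : X -> X -> R) : Prop := {
  ms_nonneg : forall x y, 0 <= d x y;
  ms_sep : forall x y, d x y = 0 <-> x = y;
  ms_sym : forall x y, d x y = d y x;
  ms_tri : forall x y z, d x z <= d x y + d y z }.

Section Topo.
Variables (X : Type) (d : X -> X -> R).

Definition mopen (U : X -> Prop) : Prop :=
  forall x, U x -> exists e, 0 < e /\ forall y, d x y < e -> U y.

Definition mclosure (S : X -> Prop) : X -> Prop :=
  fun y => forall e, 0 < e -> exists z, S z /\ d y z < e.

Definition mclosed (S : X -> Prop) : Prop :=
  forall y, mclosure S y -> S y.

Definition mcompact (K : X -> Prop) : Prop :=
  forall (I : Type) (U : I -> X -> Prop),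
    (forall i, mopen (U i)) ->
    (forall x, K x -> exists i, U i x) ->
    exists l : list I, forall x, K x -> exists i, List.In i l /\ U i x.

Definition mneighborhood (U A : X -> Prop) : Prop :=
  exists V, mopen V /\ (forall x, A x -> V x) /\ (forall x, V x -> U x).

Definition locally_compact : Prop :=
  forall x, exists K, mcompact K /\ mneighborhood K (fun y => y = x).
End Topo.

Section Flow.
Variables (X : Type) (d : X -> X -> R).

Definition is_flow (pi : X -> R -> X) : Prop :=
  (forall x t e, 0 < e -> exists del, 0 < del /\
      forall y s, d x y < del -> Rabs (t - s) < del -> d (pi x t) (pi y s) < e)
  /\ (forall x, pi x 0 = x)
  /\ (forall x t s, pi (pi x t) s = pi x (t + s)).

Variable pi : X -> R -> X.

Definition flow_image (Y : X -> Prop) (T : R -> Prop) : X -> Prop :=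
  fun z => exists y s, Y y /\ T s /\ z = pi y s.

Definition pos_invariant (Y : X -> Prop) : Prop :=
  forall z, flow_image Y (fun s => 0 <= s) z <-> Y z.

Definition omega_limit (Y : X -> Prop) : X -> Prop :=
  fun z => forall t, 0 <= t -> mclosure X d (flow_image Y (fun s => t <= s)) z.

Definition attracting_set (A : X -> Prop) : Prop :=
  pos_invariant A /\ mclosed X d A /\
  exists U, mneighborhood X d U A /\ forall z, omega_limit U z -> A z.

Definition quasi_attracting (A : X -> Prop) : Prop :=
  mclosed X d A /\
  exists (I : Type) (B : I -> X -> Prop),
    (forall i, attracting_set (B i)) /\ (forall z, A z <-> forall i, B i z).

(* (eps,t)-chain from x to y: x = x_1, ..., x_{n+1} = y, t_1..t_n >= t,
   d(x_i . t_i, x_{i+1}) <= eps.  Encoded as a nonempty list of (x_i, t_i), i=1..n, n >= 1. *)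
Fixpoint chain_from (eps t : R) (x y : X) (l : list (X * R)) : Prop :=
  match l with
  | nil => x = y
  | cons (xi, ti) l' =>
      xi = x /\ t <= ti /\
      exists xn, d (pi xi ti) xn <= eps /\ chain_from eps t xn y l'
  end.

Definition chain (eps t : R) (x y : X) : Prop :=
  exists l : list (X * R), l <> nil /\ chain_from eps t x y l.

Definition chain_limit (x : X) : X -> Prop :=
  fun y => forall eps t, 0 < eps -> 0 < t -> chain eps t x y.

Definition chain_limit_set (M : X -> Prop) : X -> Prop :=
  fun y => exists x, M x /\ chain_limit x y.
End Flow.

(* Main.v *)
Require Import Defs.
From Stdlib Require Import Reals Lra Classical List.
Open Scope R_scope.

Section S.
Variables (X : Type) (d : X -> X -> R) (pi : X -> R -> X) (M : X -> Prop).
Hypothesis Hm : metric_space X d.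
Hypothesis Hf : is_flow X d pi.

Let CF := chain_from X d pi.

Lemma dself : forall a, d a a = 0.
Proof. intro a. apply (proj2 (ms_sep _ _ Hm a a)). reflexivity. Qed.

Lemma flaw : forall x t s, pi (pi x t) s = pi x (t + s).
Proof. destruct Hf as [_ [_ H]]. exact H. Qed.

Lemma chain_mono : forall l eps eps' t t' x y, eps <= eps' -> t' <= t ->
  CF eps t x y l -> CF eps' t' x y l.
Proof.
  unfold CF. induction l as [|[xi ti] l IH]; simpl; intros. auto.
  destruct H1 as [? [? [xn [? ?]]]]. split; [auto|split;[lra|exists xn; split;[lra| eauto]]].
Qed.

Lemma chain_app : forall l1 l2 eps t x y z, CF eps t x y l1 -> CF eps t y z l2 ->
  CF eps t x z (l1 ++ l2).
Proof.
  unfold CF. induction l1 as [|[xi ti] l IH]; simpl; intros. subst; auto.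
  destruct H as [? [? [xn [? ?]]]]. repeat split; auto. exists xn; split; eauto.
Qed.

Lemma chain_one : forall eps t y s w, t <= s -> d (pi y s) w <= eps ->
  CF eps t y w ((y, s) :: nil).
Proof. unfold CF; simpl. intros. repeat split; auto. exists w; auto. Qed.

Lemma chain_last : forall l eps t x z, l <> nil -> CF eps t x z l ->
  exists l' y s, CF eps t x y l' /\ t <= s /\ d (pi y s) z <= eps.
Proof.
  unfold CF. induction l as [|[xi ti] l IH]; simpl; intros. congruence.
  destruct H0 as [-> [Ht [xn [Hd Hc]]]]. destruct l as [|p l'].
  - simpl in Hc. subst. exists nil, x, ti. simpl. auto.
  - destruct (IH eps t xn z ltac:(discriminate) Hc) as [l'' [y [s [H1 [H2 H3]]]]].
    exists ((x,ti)::l''), y, s. simpl. repeat split; auto. exists xn; auto.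
Qed.

Definition V eps t z := exists x, M x /\ exists y l, CF eps t x y l /\
  exists s, t <= s /\ d (pi y s) z < eps.

Lemma V_open : forall eps t, mopen X d (V eps t).
Proof.
  intros eps t z [x [Mx [y [l [Hc [s [Hs Hd]]]]]]]. exists (eps - d (pi y s) z).
  split. lra. intros w Hw. exists x; split; auto; exists y, l; split; auto; exists s; split; auto.
  pose proof (ms_tri _ _ Hm (pi y s) z w). lra.
Qed.

Lemma V_chain : forall eps t z, V eps t z -> exists x, M x /\ chain X d pi eps t x z.
Proof.
  intros eps t z [x [Mx [y [l [Hc [s [Hs Hd]]]]]]]. exists x; split; auto.
  exists (l ++ (y,s)::nil). split. destruct l; simpl; discriminate.
  apply chain_app with y; auto. apply chain_one; auto; lra.
Qed.

Lemma omega_sub_V : forall eps t, 0 < eps -> 0 < t -> forall z,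
  omega_limit X d pi (V eps t) z -> V eps t z.
Proof.
  intros eps t He Ht z Hz. destruct (Hz t ltac:(lra) eps He) as [w' [[w [s' [Vw [Hs' ->]]]] Hd]].
  destruct Vw as [x [Mx [y [l [Hc [s [Hs Hd2]]]]]]].
  exists x. split; auto. exists w, (l ++ (y,s)::nil). split.
  apply chain_app with y; auto. apply chain_one; auto; lra.
  exists s'. split; auto. rewrite (ms_sym _ _ Hm); auto.
Qed.

Lemma omega_closed : forall Y, mclosed X d (omega_limit X d pi Y).
Proof.
  intros Y z Hz T HT e He. destruct (Hz (e/2)) as [z1 [Hz1 Hd1]]. lra.
  destruct (Hz1 T HT (e/2)) as [z2 [Hz2 Hd2]]. lra.
  exists z2; split; auto. pose proof (ms_tri _ _ Hm z z1 z2). lra.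
Qed.

Lemma omega_fwd : forall Y z r, 0 <= r -> omega_limit X d pi Y z ->
  omega_limit X d pi Y (pi z r).
Proof.
  intros Y z r Hr Hz T HT e He. destruct Hf as [Hc _].
  destruct (Hc z r e He) as [del [Hdel Hcont]].
  destruct (Hz T HT del Hdel) as [w' [[w [s [Yw [Hs ->]]]] Hd]].
  exists (pi w (s + r)). split. exists w, (s+r). repeat split; auto; lra.
  rewrite <- flaw. apply Hcont; auto. replace (r - r) with 0 by ring. rewrite Rabs_R0. auto.
Qed.

Lemma attracting_V : forall eps t, 0 < eps -> 0 < t ->
  attracting_set X d pi (omega_limit X d pi (V eps t)).
Proof.
  intros eps t He Ht. split.
  { intro z; split. intros [y [s [Hy [Hs ->]]]]. apply omega_fwd; auto.
    intro Hz. exists z, 0. repeat split; auto. lra. symmetry. apply (proj1 (proj2 Hf)). }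
  split. apply omega_closed.
  exists (V eps t). split. exists (V eps t). split; [apply V_open|split; auto].
  intros; apply omega_sub_V; auto. auto.
Qed.

Lemma Omega_in_A : forall eps t, 0 < eps -> 0 < t -> forall z,
  chain_limit_set X d pi M z -> omega_limit X d pi (V eps t) z.
Proof.
  intros eps t He Ht z [x [Mx Hz]] T HT e Hee.
  assert (Hmin : 0 < Rmin eps (e/2)) by (apply Rmin_glb_lt; lra).
  destruct (Hz (Rmin eps (e/2)) (t+T) Hmin ltac:(lra)) as [l [Hl Hc]].
  destruct (chain_last l _ _ _ _ Hl Hc) as [l' [y [s [H1 [H2 H3]]]]].
  exists (pi y s). split.
  - exists (pi y (s - T)), T. split.
    + exists x; split; auto. exists y, l'. split.
      eapply chain_mono; [| |exact H1]. apply Rmin_l. lra.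
      exists (s - T). split. lra. rewrite dself. lra.
    + split. lra. rewrite flaw. f_equal. ring.
  - rewrite (ms_sym _ _ Hm). pose proof (Rmin_r eps (e/2)). lra.
Qed.

Lemma shift : forall eps t x x' z, 0 < eps -> 0 < t ->
  chain X d pi (eps/2) (2*t) x' z -> d (pi x t) (pi x' t) <= eps/2 ->
  chain X d pi eps t x z.
Proof.
  intros eps t x x' z He Ht [l [Hl Hc]] Hd0. destruct l as [|[xi ti] l]. congruence.
  simpl in Hc. destruct Hc as [-> [Hti [xn [Hd Hc]]]].
  exists ((x,t)::(pi x' t, ti - t)::l). split. discriminate. simpl.
  split; auto. split; [lra|]. exists (pi x' t). split; [lra|]. split; auto. split; [lra|].
  exists xn. split. rewrite flaw. replace (t + (ti - t)) with ti by ring. lra.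
  eapply (chain_mono l (eps/2) eps (2*t) t); [lra|lra|exact Hc].
Qed.

Record gd (z : X) := { gx : X; ge : R; gt : R; gdl : R; gp1 : 0 < ge; gp2 : 0 < gt;
  gp3 : 0 < gdl; gp4 : ~ chain X d pi ge gt gx z;
  gp5 : forall y, d gx y < gdl -> d (pi gx gt) (pi y gt) < ge / 2 }.

Lemma list_bound : forall z (l : list (gd z)), exists e0 t0, 0 < e0 /\ 0 < t0 /\
  forall i, In i l -> e0 <= ge z i / 2 /\ 2 * gt z i <= t0.
Proof.
  intros z l. induction l as [|a l IH].
  - exists 1, 1. simpl. repeat split; try lra; contradiction.
  - destruct IH as [e0 [t0 [H1 [H2 H3]]]].
    exists (Rmin (ge z a / 2) e0), (Rmax (2 * gt z a) t0).
    pose proof (gp1 z a). pose proof (gp2 z a).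
    split. apply Rmin_glb_lt; lra. split. eapply Rlt_le_trans; [|apply Rmax_r]. lra.
    intros i [<-|Hi]. split. apply Rmin_l. apply Rmax_l.
    destruct (H3 i Hi). split. eapply Rle_trans; [apply Rmin_r|auto].
    eapply Rle_trans; [eauto|apply Rmax_r].
Qed.

Lemma Vall : mcompact X d M -> forall z,
  (forall eps t, 0 < eps -> 0 < t -> V eps t z) -> chain_limit_set X d pi M z.
Proof.
  intros HK z Hz. apply NNPP; intro Hn.
  assert (Hbad : forall x, M x -> exists eps t, 0 < eps /\ 0 < t /\ ~ chain X d pi eps t x z).
  { intros x Mx. apply NNPP; intro H'. apply Hn. exists x; split; auto.
    intros eps t He Ht. apply NNPP; intro Hc. apply H'. exists eps, t. auto. }
  destruct (HK (gd z) (fun i y => d (gx z i) y < gdl z i)) as [l Hl].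
  - intros i y Hy. exists (gdl z i - d (gx z i) y). split. lra.
    intros w Hw. pose proof (ms_tri _ _ Hm (gx z i) y w). lra.
  - intros x Mx. destruct (Hbad x Mx) as [eps [t [He [Ht Hc]]]].
    destruct Hf as [Hcont _]. destruct (Hcont x t (eps/2) ltac:(lra)) as [del [Hdel Hc2]].
    assert (H5 : forall y, d x y < del -> d (pi x t) (pi y t) < eps / 2).
    { intros y Hy. apply Hc2; auto. replace (t - t) with 0 by ring. rewrite Rabs_R0; auto. }
    exists (Build_gd z x eps t del He Ht Hdel Hc H5). simpl. rewrite dself. auto.
  - destruct (list_bound z l) as [e0 [t0 [H1 [H2 H3]]]].
    destruct (V_chain _ _ _ (Hz e0 t0 H1 H2)) as [y [My [cl [Hcl Hcc]]]].
    destruct (Hl y My) as [i [Hi Hd]]. destruct (H3 i Hi) as [He Ht].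
    apply (gp4 z i). apply shift with y.
    apply gp1. apply gp2.
    exists cl. split; auto. eapply chain_mono; [| |exact Hcc]; lra.
    left. apply gp5. auto.
Qed.

End S.

Theorem theorem3p6 (X : Type) (d : X -> X -> R) (pi : X -> R -> X)
  (M : X -> Prop) :
  metric_space X d -> locally_compact X d -> is_flow X d pi ->
  mcompact X d M ->
  quasi_attracting X d pi (chain_limit_set X d pi M).
Proof.
  intros Hm _ Hf HK.
  assert (Heq : forall z, chain_limit_set X d pi M z <->
    forall i : {p : R * R | 0 < fst p /\ 0 < snd p},
      omega_limit X d pi (V X d pi M (fst (proj1_sig i)) (snd (proj1_sig i))) z).
  { intro z; split.
    - intros Hz [[e t] [He Ht]]. simpl in *. apply Omega_in_A; auto.
    - intros H. apply Vall; auto. intros eps t He Ht.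
      apply omega_sub_V; auto.
      exact (H (exist _ (eps, t) (conj He Ht))). }
  split.
  - intros z Hz. apply Heq. intros i. apply omega_closed; auto.
    intros e He. destruct (Hz e He) as [w [Hw Hd]]. exists w. split; auto.
    apply Heq; auto.
  - exists {p : R * R | 0 < fst p /\ 0 < snd p}.
    exists (fun i => omega_limit X d pi (V X d pi M (fst (proj1_sig i)) (snd (proj1_sig i)))).
    split; auto. intros [[e t] [He Ht]]. simpl. apply attracting_V; auto.
Qed.
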